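(* Let $P$ be a finite poset and $L\subseteq k[x_P]$ a $P$-stable monomial ideal. If $\mathfrak{p}$ is an associated prime ideal of $L$, then $\mathfrak{p}=(x_p)_{p\in I}$ for some poset ideal $I\subseteq P$.
   Context: $k$ is a field and $k[x_P]$ the polynomial ring in variables $x_p$, $p\in P$. For $b\in P$, a $b$-chain is a multichain $C: p_1\le\dots\le p_r$ with $p_r\le b$; its length is $r$, $m_C=\prod x_{p_i}$; $C$ is in a monomial $m$ if $m_C\mid m$; a longest $b$-chain in $m$ is one of maximal length among $b$-chains in $m$; $C$ goes through $a$ if $a\le b$ and $a$ is comparable to every $p_i$. For an antichain $B$, $m_B=\prod_{b\in B}x_b$. A monomial ideal $I$ is $P$-stable if whenever $m=n\,m_B\in I$ ($n$ a monomial, $B$ an antichain) and $a\in P$ is such that for every $b\in B$ some longest $b$-chain in $m$ goes through $a$, then $n\,x_a\in I$. A poset ideal is a down-closed subset. *)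

(* Defs.v *)
From HB Require Import structures.
From mathcomp Require Import all_boot all_order all_algebra.
From mathcomp Require Import mpoly.
From Stdlib Require List.

Set Implicit Arguments.
Unset Strict Implicit.
Unset Printing Implicit Defensive.

Import Order.Theory GRing.Theory.
Local Open Scope ring_scope.
Local Open Scope order_scope.

Section PStable.

Variables (k : fieldType) (d : Order.disp_t) (P : finPOrderType d).

(* k[x_P]: variables indexed by the elements of P (via enum_rank). *)
Definition kxP := {mpoly k[#|P|]}.

Definition xvar (p : P) : kxP := 'X_(enum_rank p).

Definition monP (e : P -> nat) : kxP := \prod_(p : P) xvar p ^+ e p.

Definition monset (B : {set P}) : kxP := \prod_(b in B) xvar b.

Definition antichain (B : {set P}) : Prop :=
  forall x y, x \in B -> y \in B -> (x <= y)%O -> x = y.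

(* A b-chain contained in the monomial with exponent vector e:
   a nonempty multichain p_1 <= ... <= p_r (a sorted list) with p_r <= b
   and m_C | m (each p occurs in C at most e p times). *)
Definition bchain_in (e : P -> nat) (b : P) (C : seq P) : Prop :=
  [/\ C != [::], sorted (fun x y => (x <= y)%O) C,
      (forall p, p \in C -> (p <= b)%O) &
      (forall p, count_mem p C <= e p)%N].

Definition longest_bchain_in (e : P -> nat) (b : P) (C : seq P) : Prop :=
  bchain_in e b C /\ (forall C', bchain_in e b C' -> (size C' <= size C)%N).

Definition goes_through (a b : P) (C : seq P) : Prop :=
  (a <= b)%O /\ (forall p, p \in C -> (a >=< p)%O).

Definition is_ideal (I : kxP -> Prop) : Prop :=
  [/\ I 0, (forall f g, I f -> I g -> I (f + g)) &
      (forall r f, I f -> I (r * f))].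

Definition ideal_gen (S : kxP -> Prop) : kxP -> Prop :=
  fun f => exists s : seq (kxP * kxP),
    (forall q, List.In q s -> S q.2) /\ f = \sum_(q <- s) q.1 * q.2.

Definition monomial_ideal (L : kxP -> Prop) : Prop :=
  exists E : (P -> nat) -> Prop,
    forall f, L f <-> ideal_gen (fun g => exists e, E e /\ g = monP e) f.

(* P-stability.  m = n * m_B with n = monP e, so m has exponent
   vector e + 1_B. *)
Definition P_stable (L : kxP -> Prop) : Prop :=
  forall (e : P -> nat) (B : {set P}) (a : P),
    antichain B ->
    L (monP e * monset B) ->
    (forall b, b \in B -> exists C,
        longest_bchain_in (fun p => e p + (p \in B)) b C /\ goes_through a b C) ->
    L (monP e * xvar a).

Definition prime_ideal (Q : kxP -> Prop) : Prop :=
  [/\ is_ideal Q, ~ Q 1 & (forall f g, Q (f * g) -> Q f \/ Q g)].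

Definition associated_prime (L Q : kxP -> Prop) : Prop :=
  prime_ideal Q /\ exists f : kxP, forall g, Q g <-> L (g * f).

Definition poset_ideal (I : {set P}) : Prop :=
  forall q r, r \in I -> (q <= r)%O -> q \in I.

End PStable.

(* Main.v *)
Require Import Defs.
From HB Require Import structures.
From mathcomp Require Import all_boot all_order all_algebra.
From mathcomp Require Import mpoly.
From mathcomp Require Import ring zify.
From Stdlib Require Import ClassicalEpsilon Classical.


Set Implicit Arguments.
Unset Strict Implicit.
Unset Printing Implicit Defensive.
Import Order.Theory GRing.Theory.
Local Open Scope ring_scope.

Section Gen.
Variables (k : fieldType) (n : nat).
Notation R := {mpoly k[n]}.

Definition idl (L : R -> Prop) := [/\ L 0, (forall f g, L f -> L g -> L (f + g)) &
      (forall r f, L f -> L (r * f))].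
Definition tw (L : R -> Prop) := forall g, L g <-> (forall m, m \in msupp g -> L 'X_[m]).
Definition primeQ (Q : R -> Prop) := [/\ idl Q, ~ Q 1 & (forall f g, Q (f * g) -> Q f \/ Q g)].

Lemma idl_sum L (I : eqType) (r : seq I) (F : I -> R) : idl L ->
  (forall x, x \in r -> L (F x)) -> L (\sum_(x <- r) F x).
Proof.
move=> [L0 LD LM]; elim: r => [|x r IH] H; first by rewrite big_nil.
rewrite big_cons; apply: LD; first by apply: H; exact: mem_head.
by apply: IH => y Hy; apply: H; rewrite inE Hy orbT.
Qed.

Lemma idl_sub L p q : idl L -> L p -> L q -> L (p - q).
Proof. by move=> [L0 LD LM] Lp Lq; apply: LD => //; rewrite -mulN1r; apply: LM. Qed.

Lemma idl_scale L c p : idl L -> L p -> L (c *: p).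
Proof. by move=> [L0 LD LM] Lp; rewrite -mul_mpolyC; apply: LM. Qed.

Lemma msupp_nil (x : R) : (size (msupp x) <= 0)%N -> x = 0.
Proof. by rewrite leqn0 size_eq0 msupp_eq0 => /eqP. Qed.

Lemma key L (a : R) : idl L -> tw L -> a != 0 -> forall x, L (a * x) ->
  exists N, forall m, m \in msupp x -> L 'X_[(mlead a *+ N + m)%MM].
Proof.
move=> hI hT nza x.
move: {2}(size (msupp x)) (leqnn (size (msupp x))) => s.
elim: s x => [|s IH] x hs Lax.
  by exists 0%N => m; rewrite (msupp_nil hs) mcoeff_msupp mcoeff0 eqxx.
have [->|nzx] := eqVneq x 0.
  by exists 0%N => m; rewrite mcoeff_msupp mcoeff0 eqxx.
set mx := mlead x; set c := x@_mx.
have Lmx : L 'X_[(mlead a + mx)%MM].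
  apply: (proj1 (hT (a * x)) Lax); rewrite -mleadM //; apply: mlead_supp.
  by rewrite mulf_neq0.
set x' := x - c *: 'X_[mx].
have Lay : L (a * ('X_[mlead a] * x')).
  have -> : a * ('X_[mlead a] * x') =
      'X_[mlead a] * (a * x) - (c%:MP * a) * 'X_[(mlead a + mx)%MM].
    by rewrite /x' mpolyXD -mul_mpolyC; ring.
  case: hI => L0 LD LM.
  by apply: idl_sub => //; apply: LM.
have hsz : (size (msupp ('X_[mlead a] * x')) <= s)%N.
  rewrite mulrC (perm_size (msuppMX _ _)) size_map (perm_size (msupp_rem _ _)).
  rewrite size_rem ?mlead_supp //.
  by move: hs; case: (size (msupp x)).
have [N HN] := IH _ hsz Lay.
exists N.+1 => m hm.
have [->|ne] := eqVneq m mx.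
  rewrite mulmSr -addmA mpolyXD.
  by case: hI => L0 LD LM; apply: LM.
have hm' : m \in msupp x'.
  by rewrite (perm_mem (msupp_rem _ _)) (mem_rem_uniq _ (msupp_uniq _)) inE ne hm.
have : (mlead a + m)%MM \in msupp ('X_[mlead a] * x').
  by rewrite mulrC (perm_mem (msuppMX _ _)); apply: map_f.
by move/HN; rewrite mulmSr -addmA.
Qed.

Lemma pow_in Q x N : primeQ Q -> Q (x ^+ N) -> Q x.
Proof.
move=> [hI Q1 QM]; elim: N => [|N IH]; first by rewrite expr0.
by rewrite exprS => /QM [|/IH].
Qed.

Lemma lead_in L Q (f a : R) : idl L -> tw L -> primeQ Q ->
  (forall g, Q g <-> L (g * f)) -> Q a -> a != 0 -> Q 'X_[mlead a].
Proof.
move=> hI hT hQ QL Qa nza.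
have [N HN] := key hI hT nza (proj1 (QL a) Qa).
apply: (@pow_in _ _ N hQ); apply/QL; rewrite mpolyXn.
apply/(hT _) => m; rewrite mulrC (perm_mem (msuppMX _ _)).
by case/mapP => m0 hm0 ->; apply: HN.
Qed.

Lemma all_in L Q (f : R) : idl L -> tw L -> primeQ Q ->
  (forall g, Q g <-> L (g * f)) -> forall g, Q g -> forall m, m \in msupp g -> Q 'X_[m].
Proof.
move=> hI hT hQ QL g.
move: {2}(size (msupp g)) (leqnn (size (msupp g))) => s.
elim: s g => [|s IH] g hs Qg m hm.
  by move: hm; rewrite (msupp_nil hs) mcoeff_msupp mcoeff0 eqxx.
have nzg : g != 0 by rewrite -msupp_eq0; apply/eqP => E; rewrite E in hm.
have Ql := lead_in hI hT hQ QL Qg nzg.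
have [->//|ne] := eqVneq m (mlead g).
set g' := g - g@_(mlead g) *: 'X_[mlead g].
have Qg' : Q g'.
  by case: (hQ) => hQI _ _; apply: idl_sub => //; apply: idl_scale.
apply: (IH g') => //.
  rewrite (perm_size (msupp_rem _ _)) size_rem ?mlead_supp //.
  by move: hs; case: (size (msupp g)).
by rewrite (perm_mem (msupp_rem _ _)) (mem_rem_uniq _ (msupp_uniq _)) inE ne hm.
Qed.

Lemma mono_var Q m : primeQ Q -> Q 'X_[m] -> exists i, (0 < m i)%N /\ Q 'X_i.
Proof.
move=> hQ; rewrite mpolyXE_id.
have [hI Q1 QM] := hQ.
elim: (index_enum _) => [|i r IH]; first by rewrite big_nil.
rewrite big_cons => /QM [Qi|/IH //].
exists i; case: (posnP (m i)) => [E|]; last first.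
  by move=> h; split => //; apply: pow_in Qi.
by move: Qi; rewrite E expr0.
Qed.

Lemma gen_sum (S : seq 'X_{1..n}) (c : 'X_{1..n} -> k) (J : 'I_n -> Prop) :
  (forall m, m \in S -> exists i, (0 < m i)%N /\ J i) ->
  exists s : seq (R * R), (forall q, List.In q s -> exists i, J i /\ q.2 = 'X_i) /\
     \sum_(m <- S) c m *: 'X_[m] = \sum_(q <- s) q.1 * q.2.
Proof.
elim: S => [|m S IH] H; first by exists [::]; rewrite !big_nil.
have [s [Hs Es]] : exists s : seq (R * R), (forall q, List.In q s -> exists i, J i /\ q.2 = 'X_i) /\
     \sum_(m <- S) c m *: 'X_[m] = \sum_(q <- s) q.1 * q.2.
  by apply: IH => m' hm'; apply: H; rewrite inE hm' orbT.
have [i [hi Ji]] := H m (mem_head _ _).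
exists ((c m *: 'X_[(m - U_(i))%MM], 'X_i) :: s); split.
  by move=> q /= [<-|/Hs]; [exists i|].
rewrite !big_cons Es /=; congr (_ + _).
rewrite -scalerAl -mpolyXD submK //.
by rewrite lep1mP -lt0n.
Qed.

End Gen.

Definition pb (A : Prop) : bool := if excluded_middle_informative A then true else false.
Lemma pbP A : pb A <-> A.
Proof. by rewrite /pb; case: excluded_middle_informative. Qed.

Lemma memIn (T : eqType) (x : T) s : x \in s -> List.In x s.
Proof. by elim: s => //= y s IH; rewrite inE => /orP [/eqP ->|/IH]; auto. Qed.

Section PS.
Variables (k : fieldType) (d : Order.disp_t) (P : finPOrderType d).

Lemma monP_X (m : 'X_{1..#|P|}) : monP k (fun p => m (fintype.enum_rank p)) = 'X_[m].
Proof.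
rewrite /monP /xvar mpolyXE_id (reindex (fun i : 'I_#|P| => fintype.enum_val i)) /=; last first.
  exact: onW_bij (enum_val_bij P).
by apply: eq_bigr => i _; rewrite enum_valK.
Qed.

Lemma monP_any (e : P -> nat) : exists m, monP k e = 'X_[m].
Proof.
exists [multinom e (fintype.enum_val i) | i < #|P|]; rewrite -monP_X.
by apply: eq_bigr => p _; rewrite mnmE enum_rankK.
Qed.

Lemma mono_ideal (L : kxP k P -> Prop) : monomial_ideal L -> idl L /\ tw L.
Proof.
case=> E HE.
have hI : idl L.
  split.
  - by apply/HE; exists [::]; split => //; rewrite big_nil.
  - move=> f g Lf Lg; have [s1 [H1 E1]] := proj1 (HE f) Lf.
    have [s2 [H2 E2]] := proj1 (HE g) Lg.
    apply/HE; exists (s1 ++ s2); rewrite E1 E2; split.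
      by move=> q hq; case: (List.in_app_or _ _ _ hq); auto.
    by rewrite big_cat.
  - move=> r f Lf; have [s [Hs E1]] := proj1 (HE f) Lf; rewrite E1; apply/HE; exists [seq (r * q.1, q.2) | q <- s]; split.
      move=> q hq; have [q0 [<- h]] := proj1 (List.in_map_iff _ _ _) hq; exact: (Hs q0 h).
    by rewrite big_map mulr_sumr; apply: eq_bigr => q _; rewrite mulrA.
split => // g; split.
- move=> Lg; have [s [Hs E1]] := proj1 (HE g) Lg; rewrite E1 => m hm.
  move: (msupp_sum_le hm) => /flattenP [t /mapP [q hq ->] hmq].
  rewrite mem_filter /= in hq.
  have [e [Ee Eq]] := Hs q (memIn hq).
  have [me Eme] := monP_any e.
  rewrite Eq Eme in hmq.
  move: hmq; rewrite (perm_mem (msuppMX _ _)) => /mapP [m0 _ ->].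
  rewrite addmC mpolyXD -Eme.
  case: hI => _ _ LM; apply: LM; apply/HE; exists [:: (1, monP k e)]; split.
    by move=> q' [<-|[]]; exists e.
  by rewrite big_seq1 mul1r.
- by move=> H; rewrite (mpolyE g); apply: idl_sum => // m hm; apply: idl_scale => //; exact: H.
Qed.

Lemma size_sum_count (C : seq P) (a : pred P) : all a C ->
  size C = (\sum_(p | a p) count_mem p C)%N.
Proof.
elim: C => [|x C IH]; first by move=> _; rewrite big1.
move=> /= /andP [ax aC]; rewrite IH // big_split /= -add1n; congr (_ + _)%N.
rewrite (bigD1 x) //= eqxx big1 // => p /andP [_ hp].
by rewrite eq_sym (negbTE hp).
Qed.

Lemma chain_lemma (e : P -> nat) (b q : P) : (q <= b)%O ->
  (\sum_(p | p != q) e p < e q)%N ->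
  exists C, longest_bchain_in e b C /\ goes_through q b C.
Proof.
move=> qb hsum.
have bD : bchain_in e b (nseq (e q) q).
  split.
  - by case: (e q) hsum => [|j]; [rewrite ltn0|].
  - case: (e q) => //= j; elim: j => //= j ->; by rewrite lexx.
  - by move=> p /nseqP [-> _].
  - move=> p; rewrite count_nseq /=; case: (eqVneq q p) => [->|_].
      by rewrite mul1n.
    by rewrite mul0n.
have ub : forall C, bchain_in e b C -> (size C <= \sum_(p | true) e p)%N.
  move=> C [_ _ _ hc]; rewrite (@size_sum_count C predT); last by apply/allP.
  by apply: leq_sum.
have exP : exists i, pb (exists C, bchain_in e b C /\ size C = i).
  by exists (e q); apply/pbP; exists (nseq (e q) q); rewrite size_nseq.
have ubP : forall i, pb (exists C, bchain_in e b C /\ size C = i) ->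
   (i <= \sum_(p | true) e p)%N.
  by move=> i /pbP [C [hC <-]]; apply: ub.
case: (ex_maxnP exP ubP) => j /pbP [C [hC hsz]] hmax.
have Cmax : forall C', bchain_in e b C' -> (size C' <= size C)%N.
  by move=> C' hC'; rewrite hsz; apply: hmax; apply/pbP; exists C'.
exists C; split; first by split.
split => //.
have hqC : q \in C.
  apply/negP => nq.
  case: (hC) => _ _ _ hcnt.
  have h1 : (size C <= \sum_(p | p != q) e p)%N.
    rewrite (@size_sum_count C (fun p => p != q)); first by apply: leq_sum.
    by apply/allP => p hp; apply/eqP => E; by move: nq; rewrite -E hp.
  have h2 := Cmax _ bD; rewrite size_nseq in h2.
  lia.
case: (hC) => _ hsorted _ _.
move: hsorted; rewrite (sorted_pairwise le_trans).
move: hqC => /splitPr [C1 C2].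
rewrite pairwise_cat /= => /and3P [hrel _ /andP [hq2 _]] p.
rewrite mem_cat inE => /or3P [h1|/eqP->|h2].
- apply: ge_comparable.
  by move/allrelP: hrel => /(_ p q h1 (mem_head _ _)).
- exact: comparablexx.
- by apply: le_comparable; apply: (allP hq2).
Qed.

End PS.

Theorem proposition3p18 (k : fieldType) (d : Order.disp_t) (P : finPOrderType d)
    (L Q : kxP k P -> Prop) :
  monomial_ideal L -> P_stable L -> associated_prime L Q ->
  exists I : {set P}, poset_ideal I /\
    (forall g, Q g <-> ideal_gen (fun h => exists q, q \in I /\ h = xvar k q) g).
Proof.
move=> hM hS [hQ [f QL]].
have [hI hT] := mono_ideal hM.
have hQ' : primeQ Q := hQ.
pose I := [set p : P | pb (Q (xvar k p))].
have inI : forall p, p \in I <-> Q (xvar k p).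
  by move=> p; rewrite inE; exact: pbP.
exists I; split.
  move=> q r /inI Qr qr; apply/inI.
  case: (classic (Q (xvar k q))) => // nQq; exfalso.
  have [eqr | nqr] := eqVneq q r; first by rewrite eqr in nQq.
  pose N := (msize f).+1.
  pose F := f * xvar k q ^+ N.
  have QF : forall g, Q g <-> L (g * F).
    move=> g; have -> : g * F = (g * xvar k q ^+ N) * f by rewrite /F mulrCA mulrC.
    rewrite -QL; split.
      by case: hQ' => [[_ _ LM] _ _] Qg; rewrite mulrC; apply: LM.
    case: (hQ') => _ _ QM /QM [//|/pow_in].
    by move=> /(_ hQ').
  apply: nQq; apply/QF; apply/(hT _) => m'.
  rewrite mulrC /xvar (perm_mem (msuppMX _ _)) => /mapP [m hm ->].
  have hm1 := hm; move: hm1; rewrite /F /xvar mpolyXn (perm_mem (msuppMX _ _)) => /mapP [m0 hm0 Em].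
  have Lr : L 'X_[(U_(fintype.enum_rank r) + m)%MM].
    apply: (proj1 (hT _) (proj1 (QF (xvar k r)) Qr)).
    by rewrite mulrC /xvar (perm_mem (msuppMX _ _)); apply: map_f hm.
  have := hS (fun p => m (fintype.enum_rank p)) [set r] q.
  rewrite monP_X /monset big_set1 /xvar -!mpolyXD.
  rewrite [(m + U_(_))%MM]addmC [(m + U_(fintype.enum_rank q))%MM]addmC.
  apply => //.
    by move=> x y; rewrite !inE => /eqP -> /eqP ->.
  move=> b; rewrite inE => /eqP ->; apply: chain_lemma => //.
  have E1 : forall p, p != q ->
      (m (fintype.enum_rank p) + (p \in [set r]))%N = (m0 (fintype.enum_rank p) + (p == r))%N.
    move=> p hp; rewrite Em mnmDE mulmnE mnm1E inE.
    by rewrite (inj_eq (@enum_rank_inj P)) eq_sym (negbTE hp) mul0n add0n.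
  rewrite (eq_bigr _ E1) big_split /=.
  have Hs1 : (\sum_(p | p != q) m0 (fintype.enum_rank p) <= \sum_(p : P) m0 (fintype.enum_rank p))%N.
    by rewrite [X in (_ <= X)%N](bigID (fun p => p != q)) /= leq_addr.
  have Hs2 : (\sum_(p | p != q) (p == r) <= 1)%N.
    rewrite (bigD1 r) /=; last by rewrite eq_sym.
    by rewrite eqxx big1 // => p /andP [_ /negbTE ->].
  have Hs3 : (\sum_(p : P) m0 (fintype.enum_rank p))%N = mdeg m0.
    rewrite mdegE [RHS](reindex (@fintype.enum_rank P)) //.
    exact: onW_bij (enum_rank_bij P).
  have Hs4 := msize_mdeg_lt hm0.
  have Hs5 : (N <= m (fintype.enum_rank q))%N.
    by rewrite Em mnmDE mulmnE mnm1E eqxx mul1n leq_addr.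
  rewrite /N in Hs5.
  apply: (@leq_trans (m (fintype.enum_rank q))); last exact: leq_addr.
  apply: leq_trans Hs5; rewrite ltnS; apply: leq_trans (leq_add Hs1 Hs2) _.
  by rewrite Hs3 addn1.
move=> g; split.
  move=> Qg.
  have Hm := all_in hI hT hQ' QL Qg.
  have [s [Hs Es]] := @gen_sum k #|P| (msupp g) (fun m => g@_m) (fun i => Q 'X_i)
     (fun m hm => mono_var hQ' (Hm m hm)).
  exists s; split; last by rewrite {1}(mpolyE g) Es.
  move=> q /Hs [i [Qi ->]]; exists (fintype.enum_val i).
  by rewrite /xvar enum_valK; split => //; apply/inI; rewrite /xvar enum_valK.
move=> [s [Hs ->]]; apply: idl_sum; first by case: hQ'.
move=> q hq.
have [p [hp ->]] := Hs q (memIn hq).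
by case: hQ' => [[_ _ LM] _ _]; apply: LM; apply/inI.
Qed.
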